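(* Let $Q$ be a left automorphic loop, $S\le Q$, and $x,y\in Q$. If $x\in xS\cap yS$, then $x\backslash(xS\cap yS)=\{x\backslash z : z\in xS\cap yS\}$ is a subloop of $S$.
   Context: A loop is left automorphic if every left inner mapping (element of the stabilizer of $1$ in the group generated by the left translations $L_x:y\mapsto xy$) is an automorphism. $x\backslash y=L_x^{-1}(y)$; $xS=\{xs:s\in S\}$. *)

(* Defs.v *)
(* A loop: a set with a binary operation, two-sided identity, and unique
   left/right division (encoded by the division operations and their laws). *)
Record loop := Loop {
  carrier :> Type;
  lmul : carrier -> carrier -> carrier;
  lone : carrier;
  lldiv : carrier -> carrier -> carrier;   (* x \ y = L_x^{-1} y *)
  lrdiv : carrier -> carrier -> carrier;   (* y / x = R_x^{-1} y *)
  lmul_ldiv : forall x y, lmul x (lldiv x y) = y;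
  lldiv_mul : forall x y, lldiv x (lmul x y) = y;
  lrdiv_mul : forall x y, lmul (lrdiv y x) x = y;
  lmul_rdiv : forall x y, lrdiv (lmul y x) x = y;
  lone_mul : forall x, lmul lone x = x;
  lmul_one : forall x, lmul x lone = x
}.

Arguments lmul {l}. Arguments lone {l}. Arguments lldiv {l}. Arguments lrdiv {l}.

(* Elements of the group generated by the left translations L_x : y |-> x y.
   Since the generating set {L_x, L_x^{-1}} is closed under inverses, the
   group consists exactly of the finite composites of generators. *)
Inductive in_LMlt (Q : loop) : (Q -> Q) -> Prop :=
| LMlt_id : in_LMlt Q (fun y => y)
| LMlt_L : forall x f, in_LMlt Q f -> in_LMlt Q (fun y => lmul x (f y))
| LMlt_Linv : forall x f, in_LMlt Q f -> in_LMlt Q (fun y => lldiv x (f y)).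

Definition left_inner_mapping (Q : loop) (f : Q -> Q) : Prop :=
  in_LMlt Q f /\ f lone = lone.

Definition automorphism (Q : loop) (f : Q -> Q) : Prop :=
  (forall a b : Q, f (lmul a b) = lmul (f a) (f b)) /\
  (exists g : Q -> Q, (forall a, g (f a) = a) /\ (forall a, f (g a) = a)).

Definition left_automorphic (Q : loop) : Prop :=
  forall f : Q -> Q, left_inner_mapping Q f -> automorphism Q f.

Definition subloop (Q : loop) (S : Q -> Prop) : Prop :=
  S lone /\
  (forall a b, S a -> S b -> S (lmul a b)) /\
  (forall a b, S a -> S b -> S (lldiv a b)) /\
  (forall a b, S a -> S b -> S (lrdiv a b)).

Definition lcoset (Q : loop) (x : Q) (S : Q -> Prop) : Q -> Prop :=
  fun z => exists s, S s /\ z = lmul x s.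

(* Main.v *)
Require Import Defs.

Theorem corollary6p6 (Q : loop) (S : Q -> Prop) (x y : Q) :
  left_automorphic Q ->
  subloop Q S ->
  (lcoset Q x S x /\ lcoset Q y S x) ->
  let T : Q -> Prop :=
    fun w => exists z, (lcoset Q x S z /\ lcoset Q y S z) /\ w = lldiv x z in
  subloop Q T /\ (forall w, T w -> S w).
Proof.
  intros HA [S1 [SM [SL SR]]] [_ [s0 [Hs0 Hx]]] T.
  set (f := fun w : Q => lldiv x (lmul y (lmul s0 w))).
  assert (Hf : automorphism Q f).
  { apply HA. split.
    - apply LMlt_Linv, LMlt_L, LMlt_L, LMlt_id.
    - unfold f. rewrite lmul_one, <- Hx.
      pattern x at 2. rewrite <- (lmul_one _ x). apply lldiv_mul. }
  destruct Hf as [Hm [g [Hgf Hfg]]].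
  assert (Hinj : forall a b, f a = f b -> a = b).
  { intros a b E. rewrite <- (Hgf a), <- (Hgf b), E. reflexivity. }
  assert (H1 : f lone = lone).
  { pose proof (f_equal (lldiv (f lone)) (Hm lone lone)) as E.
    rewrite lone_mul in *. rewrite lldiv_mul in E.
    rewrite <- E. set (c := f lone). pattern c at 2. rewrite <- (lmul_one _ c). apply lldiv_mul. }
  assert (HL : forall a b, f (lldiv a b) = lldiv (f a) (f b)).
  { intros a b. rewrite <- (lldiv_mul _ (f a) (f (lldiv a b))).
    rewrite <- Hm, lmul_ldiv. reflexivity. }
  assert (HR : forall a b, f (lrdiv a b) = lrdiv (f a) (f b)).
  { intros a b. rewrite <- (lmul_rdiv _ (f b) (f (lrdiv a b))).
    rewrite <- Hm, lrdiv_mul. reflexivity. }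
  assert (Hc : forall w, T w <-> (S w /\ exists u, S u /\ w = f u)).
  { intros w; split.
    - intros [z [[[s1 [Hs1 E1]] [s2 [Hs2 E2]]] Ew]]. split.
      + rewrite Ew, E1, lldiv_mul. exact Hs1.
      + exists (lldiv s0 s2). split; [auto|]. unfold f. rewrite lmul_ldiv, Ew, E2. reflexivity.
    - intros [Hw [u [Hu Ew]]]. exists (lmul x w). split; [split|].
      + exists w; auto.
      + exists (lmul s0 u). split; [auto|]. subst w. unfold f. rewrite lmul_ldiv. reflexivity.
      + rewrite lldiv_mul. reflexivity. }
  split.
  - split; [|split; [|split]].
    + apply Hc. split; auto. exists lone. auto.
    + intros a b Ha Hb. apply Hc in Ha as [Ha [u [Hu ->]]]. apply Hc in Hb as [Hb [v [Hv ->]]].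
      apply Hc. split; auto. exists (lmul u v). auto.
    + intros a b Ha Hb. apply Hc in Ha as [Ha [u [Hu ->]]]. apply Hc in Hb as [Hb [v [Hv ->]]].
      apply Hc. split; auto. exists (lldiv u v). auto.
    + intros a b Ha Hb. apply Hc in Ha as [Ha [u [Hu ->]]]. apply Hc in Hb as [Hb [v [Hv ->]]].
      apply Hc. split; auto. exists (lrdiv u v). auto.
  - intros w Hw. apply Hc in Hw. tauto.
Qed.
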